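(* The bi-monotonic product is associative: for any three pairs of algebras $(\mathcal{A}_{k,\ell},\mathcal{A}_{k,r})$, $k=1,2,3$, with linear functionals $\varphi_k$ on $\mathcal{A}_{k,\ell}\sqcup\mathcal{A}_{k,r}$, one has \[(\varphi_1\rhd\!\!\rhd\varphi_2)\rhd\!\!\rhd\varphi_3=\varphi_1\rhd\!\!\rhd(\varphi_2\rhd\!\!\rhd\varphi_3)\] as linear functionals on $(\mathcal{A}_{1,\ell}\sqcup\mathcal{A}_{1,r})\sqcup(\mathcal{A}_{2,\ell}\sqcup\mathcal{A}_{2,r})\sqcup(\mathcal{A}_{3,\ell}\sqcup\mathcal{A}_{3,r})$ (under the natural identifications). Here a product $\varphi_i\rhd\!\!\rhd\varphi_j$ is regarded as a functional on the pair of algebras $(\mathcal{A}_{i,\ell}\sqcup\mathcal{A}_{j,\ell},\ \mathcal{A}_{i,r}\sqcup\mathcal{A}_{j,r})$, using $(\mathcal{A}_{i,\ell}\sqcup\mathcal{A}_{i,r})\sqcup(\mathcal{A}_{j,\ell}\sqcup\mathcal{A}_{j,r})\cong(\mathcal{A}_{i,\ell}\sqcup\mathcal{A}_{j,\ell})\sqcup(\mathcal{A}_{i,r}\sqcup\mathcal{A}_{j,r})$.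
   Context: For algebras $\mathcal{C}_k$, $\sqcup_k\mathcal{C}_k$ denotes the free product without identification of units, $*_k\mathcal{C}_k$ denotes the free product of unital algebras with identification of units, and $\widetilde{\mathcal{C}}=\mathbb{C}1\oplus\mathcal{C}$ denotes the unitization; one has $\widetilde{\mathcal{C}_1}*\widetilde{\mathcal{C}_2}\cong\widetilde{\mathcal{C}_1\sqcup\mathcal{C}_2}$. Notation. For $n\ge1$ and $\chi:\{1,\dots,n\}\to\{\ell,r\}$ with $\chi^{-1}(\{\ell\})=\{i_1<\dots<i_p\}$ and $\chi^{-1}(\{r\})=\{i_{p+1}>\dots>i_n\}$, let $\prec_\chi$ be the total order $i_1\prec_\chi i_2\prec_\chi\cdots\prec_\chi i_n$ on $\{1,\dots,n\}$. A $\chi$-interval is a subset of $\{1,\dots,n\}$ which is an interval for $\prec_\chi$. For $V=\{v_1<\dots<v_s\}\subseteq\{1,\dots,n\}$ write $a_V=a_{v_1}\cdots a_{v_s}$; a functional applied to the empty product equals $1$. For $\omega:\{1,\dots,n\}\to K$, $\pi_{\chi,\omega}$ is the unique partition of $\{1,\dots,n\}$ into blocks $V_1,\dots,V_m$ such that each $V_k$ is a $\chi$-interval, $\max_{\prec_\chi}V_k\prec_\chi\min_{\prec_\chi}V_{k+1}$, $\omega$ is constant on each $V_k$, and $\omega(V_k)\ne\omega(V_{k+1})$ for $1\le k\le m-1$. c-bi-free product. Given pairs of unital algebras $(\mathcal{B}_{k,\ell},\mathcal{B}_{k,r})_{k\in K}$ and unital linear functionals $\varphi_k,\psi_k$ on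 $\mathcal{B}_{k,\ell}*\mathcal{B}_{k,r}$, their c-bi-free product $(\varphi,\psi)$ is the unique pair of unital linear functionals on $*_k(\mathcal{B}_{k,\ell}*\mathcal{B}_{k,r})$ restricting to $\varphi_k,\psi_k$ on each $\mathcal{B}_{k,\ell}*\mathcal{B}_{k,r}$ and such that whenever $n\ge1$, $\chi:\{1,\dots,n\}\to\{\ell,r\}$, $\omega:\{1,\dots,n\}\to K$, $b_j\in\mathcal{B}_{\omega(j),\chi(j)}$ and $\psi(b_V)=0$ for all $V\in\pi_{\chi,\omega}$, then $\psi(b_1\cdots b_n)=0$ and $\varphi(b_1\cdots b_n)=\prod_{V\in\pi_{\chi,\omega}}\varphi(b_V)$. Bi-monotonic product. Let $(\mathcal{A}_{k,\ell},\mathcal{A}_{k,r})$, $k=1,2$, be pairs of algebras with linear functionals $\varphi_k$ on $\mathcal{A}_{k,\ell}\sqcup\mathcal{A}_{k,r}$. Let $\widetilde{\varphi_k}$ be the unital extension of $\varphi_k$ to $\widetilde{\mathcal{A}_{k,\ell}}*\widetilde{\mathcal{A}_{k,r}}\cong\widetilde{\mathcal{A}_{k,\ell}\sqcup\mathcal{A}_{k,r}}$, and $\delta_1$ the unital functional on $\widetilde{\mathcal{A}_{1,\ell}\sqcup\mathcal{A}_{1,r}}$ vanishing on $\mathcal{A}_{1,\ell}\sqcup\mathcal{A}_{1,r}$. Let $(\widetilde\varphi,\widetilde\psi)$ be the c-bi-free product of $(\widetilde{\varphi_1},\delta_1)$ and $(\widetilde{\varphi_2},\widetilde{\varphi_2})$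 for the pairs $(\widetilde{\mathcal{A}_{k,\ell}},\widetilde{\mathcal{A}_{k,r}})$, $k=1,2$. The bi-monotonic product $\varphi_1\rhd\!\!\rhd\varphi_2$ is the restriction of $\widetilde\varphi$ to $(\mathcal{A}_{1,\ell}\sqcup\mathcal{A}_{1,r})\sqcup(\mathcal{A}_{2,\ell}\sqcup\mathcal{A}_{2,r})$. *)

(* Defs.v *)
From HB Require Import structures.
From mathcomp Require Import all_boot all_order all_algebra.
Set Implicit Arguments. Unset Strict Implicit. Unset Printing Implicit Defensive.
Import Order.TTheory GRing.Theory Num.Theory.
Local Open Scope ring_scope.

Inductive side := Lft | Rgt.
Definition side_eqb (x y : side) : bool :=
  match x, y with Lft, Lft | Rgt, Rgt => true | _, _ => false end.
Definition is_left (x : side) : bool := if x is Lft then true else false.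

Record nualg (R : fieldType) := NUAlg {
  nua_car :> lmodType R;
  nua_mul : nua_car -> nua_car -> nua_car;
  nua_mulA : forall a b c, nua_mul a (nua_mul b c) = nua_mul (nua_mul a b) c;
  nua_linl : forall (k : R) a b c,
      nua_mul (k *: a + b) c = k *: nua_mul a c + nua_mul b c;
  nua_linr : forall (k : R) a b c,
      nua_mul c (k *: a + b) = k *: nua_mul c a + nua_mul c b }.

(* A family of base algebras A i (i : I, the "colours") is fixed.  The free  *)
(* product (without identification of units) of any subfamily {A i | i in S}*)
(* is the free (non-unital) algebra on the letters (i, a), a in A i, modulo  *)
(* a (i,a)(i,b) = (i, ab) and linearity in each letter; its unitization is   *)
(* obtained by adding the empty word (= the unit).  Hence a linear           *)
(* functional on it is the same thing as a function on words which is       *)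
(* multilinear in each letter and compatible with merging adjacent letters   *)
(* of the same colour.  Elements of the (unitized) free product are          *)
(* represented by formal linear combinations of words; all functionals below *)
(* are evaluated by linear extension, which is well defined on the quotient. *)
Section Words.
Variables (R : fieldType) (I : Type) (A : I -> nualg R).

Definition letter := {i : I & nua_car (A i)}.
Definition word := seq letter.
Definition mkl (i : I) (a : A i) : letter := Tagged (fun j => nua_car (A j)) a.

Definition on_colors (S : pred I) (w : word) : bool :=
  all (fun l : letter => S (tag l)) w.

Definition multilinear_on (S : pred I) (f : word -> R) : Prop :=
  forall (u v : word) (i : I), S i -> on_colors S u -> on_colors S v ->
  forall (k : R) (a b : A i),
    f (u ++ mkl (k *: a + b) :: v) = k * f (u ++ mkl a :: v) + f (u ++ mkl b :: v).

Definition merge_on (S : pred I) (f : word -> R) : Prop :=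
  forall (u v : word) (i : I), S i -> on_colors S u -> on_colors S v ->
  forall (a b : A i),
    f (u ++ mkl a :: mkl b :: v) = f (u ++ mkl (nua_mul a b) :: v).

Definition lin_functional_on (S : pred I) (f : word -> R) : Prop :=
  multilinear_on S f /\ merge_on S f.

Definition unital_functional_on (S : pred I) (f : word -> R) : Prop :=
  lin_functional_on S f /\ f [::] = 1.

Definition felem := seq (R * word).
Definition ev (f : word -> R) (x : felem) : R := \sum_(t <- x) t.1 * f t.2.
Definition fmul (x y : felem) : felem :=
  [seq (s.1 * t.1, s.2 ++ t.2) | s <- x, t <- y].
Definition fone : felem := [:: (1, [::])].
Definition prodf (xs : seq felem) : felem := foldr fmul fone xs.
Definition felem_on (S : pred I) (x : felem) : bool :=
  all (fun t => on_colors S t.2) x.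

Definition chi_order (chi : nat -> side) (n : nat) : seq nat :=
  [seq i <- iota 0 n | is_left (chi i)] ++
  rev [seq i <- iota 0 n | ~~ is_left (chi i)].

Fixpoint runs (K : eqType) (f : nat -> K) (s : seq nat) : seq (seq nat) :=
  match s with
  | [::] => [::]
  | x :: s' =>
      match runs f s' with
      | V :: rest => if f (head x V) == f x then (x :: V) :: rest
                     else [:: x] :: V :: rest
      | [::] => [:: [:: x]]
      end
  end.

Definition pi_chi_omega (K : eqType) (chi : nat -> side) (omega : nat -> K)
  (n : nat) : seq (seq nat) := runs omega (chi_order chi n).

Definition bprod (b : nat -> felem) (n : nat) (V : seq nat) : felem :=
  prodf [seq b i | i <- iota 0 n & i \in V].

(* c-bi-free product (phi, psi) of the pairs of unital functionals
   (phik k, psik k) on B_{k,l} * B_{k,r}, where B_{k,chi} is the unitization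
   of the free product of the A i with S k chi i. *)
Definition cbifree (K : finType) (S : K -> side -> pred I)
    (phik psik : K -> word -> R) (phi psi : word -> R) : Prop :=
  let D := [pred i | [exists k, S k Lft i || S k Rgt i]] in
  [/\ unital_functional_on D phi, unital_functional_on D psi,
      (forall (k : K) (w : word), on_colors (predU (S k Lft) (S k Rgt)) w ->
           phi w = phik k w /\ psi w = psik k w) &
      (forall (n : nat) (chi : nat -> side) (omega : nat -> K) (b : nat -> felem),
         (0 < n)%N ->
         (forall j, (j < n)%N -> felem_on (S (omega j) (chi j)) (b j)) ->
         (forall V, V \in pi_chi_omega chi omega n -> ev psi (bprod b n V) = 0) ->
         ev psi (bprod b n (iota 0 n)) = 0 /\
         ev phi (bprod b n (iota 0 n)) =
           \prod_(V <- pi_chi_omega chi omega n) ev phi (bprod b n V))].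

Definition uext (f : word -> R) : word -> R :=
  fun w => if w is [::] then 1 else f w.
Definition delta_fun : word -> R := fun w => if w is [::] then 1 else 0.

(* Bi-monotonic product: t1 is a functional on the free product of the
   A i, i in D1 (pair (A_{1,l}, A_{1,r}) where sd gives the face), t2 the same
   for D2; t is t1 |>> t2 on the free product of the A i, i in D1 or D2.
   (Relational form of the definition via the c-bi-free product.) *)
Definition bimon_rel (sd : I -> side) (D1 D2 : pred I) (t1 t2 t : word -> R) : Prop :=
  exists phi psi : word -> R,
    @cbifree bool
      (fun (k : bool) (c : side) =>
         [pred i | (if k then D1 i else D2 i) && side_eqb (sd i) c])
      (fun k => if k then uext t1 else uext t2)
      (fun k => if k then delta_fun else uext t2) phi psi /\
    (forall w : word, w <> [::] -> on_colors (predU D1 D2) w -> t w = phi w).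

End Words.

Definition pairc (k : nat) : pred ('I_3 * side) :=
  [pred c | nat_of_ord c.1 == k].

(* Main.v *)
Require Import Defs.
From HB Require Import structures.
From mathcomp Require Import all_boot all_order all_algebra.
From Stdlib Require Import FunctionalExtensionality.
Set Implicit Arguments. Unset Strict Implicit. Unset Printing Implicit Defensive.
Import Order.TTheory GRing.Theory Num.Theory.


Definition chiord (P : pred nat) (s : seq nat) : seq nat :=
  [seq i <- s | P i] ++ rev [seq i <- s | ~~ P i].

Fixpoint splt (p : pred nat) (s : seq nat) : seq (seq nat) :=
  if s is x :: s' then
    let r := splt p s' in
    if p x then [::] :: r else (x :: head [::] r) :: behead r
  else [:: [::]].

Lemma splt_nn p s : splt p s != [::].
Proof. by case: s => //= x s; case: (p x). Qed.

Lemma splt_head p s : splt p s = head [::] (splt p s) :: behead (splt p s).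
Proof. by case: s => //= x s; case: (p x). Qed.

Lemma flatten_splt p s : flatten (splt p s) = [seq x <- s | ~~ p x].
Proof.
elim: s => //= x s IH; case: (p x) => /=; first by rewrite IH.
by rewrite -IH [in RHS](splt_head p s).
Qed.

Lemma mem_splt p s g x : g \in splt p s -> x \in g -> (x \in s) && ~~ p x.
Proof.
move=> gS xg; have : x \in flatten (splt p s) by apply/flattenP; exists g.
by rewrite flatten_splt mem_filter andbC.
Qed.

Lemma splt_map (f : nat -> nat) p s :
  splt p (map f s) = map (map f) (splt (fun x => p (f x)) s).
Proof.
elim: s => //= x s IH; rewrite IH; case: (p (f x)) => //=.
by case: (splt _ s).
Qed.

Lemma splt_filter (p q : pred nat) s : (forall x, x \in s -> p x -> q x) ->
  splt p [seq x <- s | q x] = map (fun g => [seq x <- g | q x]) (splt p s).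
Proof.
elim: s => //= x s IH H.
have IH' : splt p [seq x <- s | q x] = map (fun g => [seq x <- g | q x]) (splt p s).
  by apply: IH => y ys; apply: H; rewrite inE ys orbT.
case qx: (q x); case px: (p x) => /=.
- by rewrite px IH'.
- by rewrite px IH' qx; case: (splt p s) (splt_nn p s).
- by move: (H x (mem_head _ _) px); rewrite qx.
- by rewrite IH' qx; case: (splt p s) (splt_nn p s).
Qed.

Lemma splt_flatten (p1 p2 : pred nat) c :
  flatten (map (splt p2) (splt p1 c)) = splt (fun x => p1 x || p2 x) c.
Proof.
elim: c => //= x c IH; case p1x: (p1 x) => /=; first by rewrite IH.
rewrite -IH; case: (splt p1 c) (splt_nn p1 c) => // h b _ /=.
case p2x: (p2 x) => //=.
by case: (splt p2 h) (splt_nn p2 h).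
Qed.

Lemma filter_nilmem (s : seq nat) : [seq y <- s | y \in [::]] = [::].
Proof. by elim: s. Qed.

Lemma filter_mem_seg p c g : uniq c -> g \in splt p c -> [seq y <- c | y \in g] = g.
Proof.
elim: c g => [|x c IH] g /=; first by move=> _; rewrite inE => /eqP->.
move=> /andP[xc uc].
have xg : forall g', g' \in splt p c -> x \notin g'.
  by move=> g' g'S; apply/negP => /(mem_splt g'S)/andP[xc' _]; rewrite xc' in xc.
case px: (p x).
  rewrite inE => /orP[/eqP->|gS]; first by rewrite /= filter_nilmem.
  by rewrite (negbTE (xg _ gS)) IH.
move: (splt_head p c) => E.
rewrite inE => /orP[/eqP->|gS]; last first.
  have gS' : g \in splt p c by rewrite E inE gS orbT.
  by rewrite (negbTE (xg _ gS')) IH.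
rewrite inE eqxx /=; congr (_ :: _).
have hS : head [::] (splt p c) \in splt p c by rewrite E mem_head.
rewrite -[RHS](IH _ uc hS); apply: eq_in_filter => y yc.
rewrite inE; case: eqP => // yx; by rewrite -yx yc in xc.
Qed.

Lemma chiord_filter P q s : chiord P [seq x <- s | q x] = [seq x <- chiord P s | q x].
Proof.
rewrite /chiord filter_cat filter_rev; congr (_ ++ rev _); rewrite -!filter_predI;
by apply: eq_filter => x /=; rewrite andbC.
Qed.

Lemma chiord_perm P s : perm_eq (chiord P s) s.
Proof.
apply: perm_trans (permEl (perm_filterC P s)).
by rewrite perm_cat2l perm_rev.
Qed.

Lemma chiord_map (f : nat -> nat) P s :
  chiord P (map f s) = map f (chiord (fun x => P (f x)) s).
Proof. by rewrite /chiord map_cat map_rev !filter_map. Qed.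

Lemma runs_flatten (K : eqType) (f : nat -> K) s : flatten (runs f s) = s.
Proof.
elim: s => //= x s IH; case E: (runs f s) => [|V rest]; first by rewrite E in IH; rewrite -IH.
by case: ifP => _ /=; rewrite -IH E.
Qed.

Lemma runs_const (K : eqType) (f : nat -> K) s V :
  V \in runs f s -> (V != [::]) && all (fun y => f y == f (head 0%N V)) V.
Proof.
elim: s V => //= x s IH V; case E: (runs f s) => [|V' rest].
  by rewrite inE => /eqP-> /=; rewrite eqxx.
have /andP[nV' aV'] : (V' != [::]) && all (fun y => f y == f (head 0%N V')) V'.
  by apply: IH; rewrite E mem_head.
case: ifP => Hf; rewrite inE => /orP[/eqP->|Vr].
- rewrite /= eqxx /=; apply/allP => y yV; move/allP: aV' => /(_ y yV)/eqP->.
  by case: V' nV' Hf {yV E} => //= z V' _ /eqP.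
- by apply: IH; rewrite E inE Vr orbT.
- by rewrite /= eqxx.
- by apply: IH; rewrite E.
Qed.

Lemma runs_cons_shape (K : eqType) (f : nat -> K) x s :
  exists V rest, runs f (x :: s) = (x :: V) :: rest.
Proof.
rewrite /=; case: (runs f s) => [|V rest]; first by exists [::], [::].
by case: ifP => _; [exists V, rest | exists [::], (V :: rest)].
Qed.

Lemma runs_splt (f : pred nat) s :
  [seq V <- runs f s | ~~ f (head 0%N V)] = [seq g <- splt f s | g != [::]].
Proof.
elim: s => //= x s IH.
case: s IH => [|y s] IH.
  by rewrite /=; case: (f x).
have [V1 [R1 E1]] := runs_cons_shape f y s.
rewrite E1 /= in IH *.
case fx: (f x); case fy: (f y) => /=; rewrite ?fx ?fy ?eqxx /=.
- by rewrite fy /= in IH; rewrite -IH.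
- by rewrite fy /= in IH; rewrite -IH.
- by rewrite fy /= in IH; rewrite IH.
- rewrite fy /= in IH; move: IH.
  case: (splt f s) (splt_nn f s) => // h b _ /= [-> ->] //.
Qed.

Section Expand.
Variable R : fieldType.
Local Open Scope ring_scope.

Fixpoint Ex (f : seq nat -> R) (L : seq (nat * R)) : R :=
  match L with
  | [::] => f [::]
  | (j, c) :: L' => Ex (fun s => f (j :: s)) L' + c * Ex f L'
  end.

Lemma eq_Ex f g L : f =1 g -> Ex f L = Ex g L.
Proof.
elim: L f g => [|[j c] L IH] f g H /=; first exact: H.
by rewrite (IH _ (fun s => g (j :: s))) ?(IH f g) // => s; apply: H.
Qed.

Lemma Ex_eqQ (Q : pred nat) f g L :
  (forall s, subseq s (map fst L) ->
     (forall x, x \in map fst L -> Q x -> x \in s) -> f s = g s) ->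
  (forall p, p \in L -> Q p.1 -> p.2 = 0) -> Ex f L = Ex g L.
Proof.
elim: L f g => [|[j c] L IH] f g Hfg HQ /=.
  by apply: Hfg => // x.
have HQ' : forall p, p \in L -> Q p.1 -> p.2 = 0.
  by move=> p pL; apply: HQ; rewrite inE pL orbT.
congr (_ + _).
  apply: IH => // s ss Hs; apply: Hfg; first by rewrite /= eqxx.
  move=> x; rewrite inE => /orP[/eqP->|xL] Qx; rewrite inE ?eqxx //.
  by rewrite Hs ?orbT.
case Qj: (Q j).
  have c0 : c = 0 by apply: (HQ (j, c)) => //; rewrite inE eqxx.
  by rewrite c0 !mul0r.
congr (_ * _); apply: IH => // s ss Hs; apply: Hfg.
  by apply: (subseq_trans ss); apply: subseq_cons.
move=> x; rewrite inE => /orP[/eqP->|]; [by rewrite Qj | exact: Hs].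
Qed.

Lemma Ex_diff f g L :
  (forall s, subseq s (map fst L) -> (size s < size L)%N -> f s = g s) ->
  Ex f L - f (map fst L) = Ex g L - g (map fst L).
Proof.
elim: L f g => [|[j c] L IH] f g H /=; first by rewrite !subrr.
have E1 : Ex f L = Ex g L.
  apply: (@Ex_eqQ pred0) => // s ss _; apply: H.
    by apply: (subseq_trans ss); apply: subseq_cons.
  by rewrite ltnS (leq_trans (size_subseq ss)) // size_map.
have IHe : Ex (fun s => f (j :: s)) L - f (j :: map fst L) =
           Ex (fun s => g (j :: s)) L - g (j :: map fst L).
  apply: (IH (fun s => f (j :: s)) (fun s => g (j :: s))) => s ss sz.
  by apply: H; [rewrite /= eqxx | ].
rewrite E1.
set a := Ex (fun s => f (j :: s)) L. set b := Ex (fun s => g (j :: s)) L.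
set x := f _. set y := g _. set z := c * _.
move: IHe; rewrite -/a -/b -/x -/y => IHe.
by rewrite addrAC IHe addrAC.
Qed.

Lemma Ex_mul (P : pred nat) f1 f2 L :
  Ex (fun s => f1 [seq x <- s | P x] * f2 [seq x <- s | ~~ P x]) L =
  Ex f1 [seq p <- L | P p.1] * Ex f2 [seq p <- L | ~~ P p.1].
Proof.
elim: L f1 f2 => [|[j c] L IH] f1 f2 //=.
case Pj: (P j) => /=.
  rewrite (IH (fun s => f1 (j :: s)) f2) IH.
  by rewrite mulrDl mulrA.
rewrite (IH f1 (fun s => f2 (j :: s))) IH.
by rewrite mulrDr mulrCA.
Qed.

Lemma Ex_bigprod (G : seq (seq nat)) (h : seq nat -> seq nat -> R) L :
  uniq (flatten G) -> {subset map fst L <= flatten G} ->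
  Ex (fun s => \prod_(g <- G) h g [seq x <- s | x \in g]) L =
  \prod_(g <- G) Ex (h g) [seq p <- L | p.1 \in g].
Proof.
elim: G L => [|g G IH] L /= Hu Hs.
  case: L Hs => [|[j c] L] Hs; first by rewrite /= !big_nil.
  by have := Hs j; rewrite inE eqxx => /(_ isT).
rewrite cat_uniq in Hu; case/and3P: Hu => ug hg uG.
have dis : forall g' x, g' \in G -> x \in g' -> x \notin g.
  move=> g' x g'G xg'; apply/negP => xg; move/hasPn: hg; move/(_ x).
  by rewrite xg => /(_ (introT flattenP (ex_intro2 _ _ g' g'G xg'))).
rewrite big_cons.
set F2 := fun s' => \prod_(g' <- G) h g' [seq x <- s' | x \in g'].
transitivity (Ex (h g) [seq p <- L | p.1 \in g] * Ex F2 [seq p <- L | ~~ (p.1 \in g)]).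
  rewrite -(Ex_mul (fun x => x \in g)); apply: eq_Ex => s /=; rewrite big_cons; congr (_ * _).
  rewrite /F2; apply: eq_big_seq => g' g'G; congr (h g' _).
  rewrite -filter_predI; apply: eq_filter => x /=; case xg': (x \in g') => //=.
  by rewrite (dis _ _ g'G xg').
congr (_ * _); rewrite /F2 IH //.
  apply: eq_big_seq => g' g'G; congr (Ex _ _); rewrite -filter_predI.
  apply: eq_filter => [[x c]] /=; case xg': (x \in g') => //=.
  by rewrite (dis _ _ g'G xg').
move=> x /mapP[[y c] /=]; rewrite mem_filter => /andP[/= yg yL] ->.
have := Hs y (map_f fst yL); rewrite mem_cat => /orP[H|//].
by rewrite H in yg.
Qed.

Fixpoint mk1 (f : seq nat -> R) (ls : seq nat) : seq R :=
  if ls is j :: ls' then (1 - Ex (fun s => f (j :: s)) (zip ls' (mk1 f ls'))) :: mk1 f ls'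
  else [::].
Definition mk0 (f : seq nat -> R) (ls : seq nat) : seq R :=
  if ls is j :: ls' then (- Ex (fun s => f (j :: s)) (zip ls' (mk1 f ls'))) :: mk1 f ls'
  else [::].

Lemma size_mk1 f ls : size (mk1 f ls) = size ls.
Proof. by elim: ls => //= j ls ->. Qed.
Lemma size_mk0 f ls : size (mk0 f ls) = size ls.
Proof. by case: ls => //= j ls; rewrite size_mk1. Qed.

Lemma mk1P f ls : f [::] = 1 -> Ex f (zip ls (mk1 f ls)) = 1.
Proof. by move=> H; elim: ls => //= j ls ->; rewrite mulr1 addrC subrK. Qed.

Lemma mk0P f ls : f [::] = 1 -> ls != [::] -> Ex f (zip ls (mk0 f ls)) = 0.
Proof. by case: ls => //= j ls H _; rewrite mk1P // mulr1 addrN. Qed.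

Lemma zip_index (cs : seq R) (ls : seq nat) : uniq ls -> size cs = size ls ->
  map (fun j => (j, nth 0 cs (index j ls))) ls = zip ls cs.
Proof.
elim: ls cs => [|x ls IH] [|c cs] //= /andP[xn u] [sz].
rewrite eqxx /=; congr (_ :: _); rewrite -(IH cs u sz).
apply/eq_in_map => j jl /=.
have -> : (x == j) = false by apply/eqP => xj; move: xn; rewrite xj jl.
by [].
Qed.

Lemma Ex_zero f s : Ex f (map (fun j => (j, 0)) s) = f s.
Proof. by elim: s f => //= j s IH f; rewrite IH mul0r addr0. Qed.

Lemma mapfst (c : nat -> R) s : map fst (map (fun j => (j, c j)) s) = s.
Proof. by elim: s => //= j s ->. Qed.

End Expand.

Lemma seg_find (G : seq (seq nat)) g j : uniq (flatten G) -> g \in G -> j \in g ->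
  nth [::] G (find (fun g => j \in g) G) = g.
Proof.
elim: G => //= g' G IH; rewrite cat_uniq => /and3P[_ hg uG].
rewrite inE => /orP[/eqP<-|gG] jg; first by rewrite jg.
case jg': (j \in g') => /=; last by apply: IH.
have jf : j \in flatten G by apply/flattenP; exists g.
by move/hasPn: hg => /(_ j jf); rewrite jg'.
Qed.

Lemma map_nth_iota (T : Type) (x0 : T) (u : seq T) : map (nth x0 u) (iota 0 (size u)) = u.
Proof. by rewrite map_nth_iota0 // take_size. Qed.

Section Words2.
Variables (R : fieldType) (I : Type) (A : I -> nualg R).
Local Open Scope ring_scope.

Lemma ev_fmul (f : word A -> R) (x y : felem A) :
  ev f (fmul x y) = \sum_(a <- x) a.1 * ev (fun u => f (a.2 ++ u)) y.
Proof.
rewrite /ev /fmul; elim: x => [|a x IH] /=; first by rewrite !big_nil.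
rewrite big_cat big_cons IH big_map mulr_sumr; congr (_ + _).
by apply: eq_bigr => t _ /=; rewrite mulrA.
Qed.

Definition bb (L : nat -> letter A) (cof : nat -> R) (j : nat) : felem A :=
  [:: (1, [:: L j]); (cof j, [::])].

Lemma ev_prodf (f : word A -> R) L cof s :
  ev f (prodf (map (bb L cof) s)) = Ex (fun s' => f (map L s')) (map (fun j => (j, cof j)) s).
Proof.
elim: s f => [|j s IH] f.
  by rewrite /= /ev /fone big_cons big_nil mul1r addr0.
rewrite [prodf _]/= ev_fmul big_cons big_cons big_nil /= !IH mul1r addr0 //.
Qed.

Variables (sd : I -> side) (D1 : pred I) (t1 t2 : word A -> R).

Definition D1l (L : nat -> letter A) (j : nat) : bool := D1 (tag (L j)).
Definition isLl (L : nat -> letter A) (j : nat) : bool := Defs.is_left (sd (tag (L j))).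
Definition Fl (L : nat -> letter A) (s : seq nat) : R :=
  uext t1 [seq L j | j <- s & D1l L j] *
  \prod_(g <- splt (D1l L) (chiord (isLl L) s)) uext t2 [seq L j | j <- s & j \in g].

Lemma Fl_map L (f : nat -> nat) s : {in s &, injective f} ->
  Fl L (map f s) = Fl (L \o f) s.
Proof.
move=> inj; rewrite /Fl filter_map -map_comp chiord_map splt_map big_map.
congr (_ * _); apply: eq_big_seq => g gS; congr (uext t2 _).
rewrite filter_map -map_comp; congr map; apply: eq_in_filter => x xs /=.
have gs : {subset g <= s}.
  move=> y yg; have /andP[yc _] := mem_splt gS yg.
  by move: yc; rewrite (perm_mem (chiord_perm _ _)).
apply/mapP/idP => [[y yg e]|xg]; last by exists x.
by rewrite (inj x y xs (gs y yg) e).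
Qed.

Lemma Fl_sub (x0 : letter A) (w : word A) s : uniq s ->
  Fl (nth x0 (map (nth x0 w) s)) (iota 0 (size s)) = Fl (nth x0 w) s.
Proof.
move=> us.
have E : nth x0 (map (nth x0 w) s) = nth x0 w \o nth (size w) s.
  apply: functional_extensionality => j /=; case: (ltnP j (size s)) => H.
    by rewrite (nth_map (size w)).
  by rewrite !nth_default ?size_map.
rewrite E -Fl_map.
  by rewrite (_ : map (nth (size w) s) (iota 0 (size s)) = s) //; exact: mkseq_nth.
move=> i j; rewrite !mem_iota /= !add0n => i_ j_ e.
by apply/eqP; rewrite -(nth_uniq (size w) i_ j_ us) e.
Qed.



Lemma noD2 (x0 : letter A) (phi : word A -> R) u :
  (forall u, on_colors D1 u -> phi u = uext t1 u) -> on_colors D1 u ->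
  phi u = Fl (nth x0 u) (iota 0 (size u)).
Proof.
move=> H uc; rewrite H // /Fl; rewrite /on_colors in uc.
have aD : all (D1l (nth x0 u)) (iota 0 (size u)).
  apply/allP => j; rewrite mem_iota add0n => /andP[_ jl].
  by rewrite /D1l; move/(all_nthP x0): uc => /(_ j jl).
rewrite (all_filterP aD) map_nth_iota big1_seq ?mulr1 // => g /andP[_ gS].
have -> : g = [::].
  case: g gS => // y g gS; have /andP[yc nD] := mem_splt gS (mem_head y g).
  move: yc; rewrite (perm_mem (chiord_perm _ _)) => yi.
  by move/allP: aD => /(_ y yi); rewrite (negbTE nD).
by rewrite filter_nilmem.
Qed.

Lemma withD2 (x0 : letter A) (D2 : pred I) (phi psi : word A -> R) (u : word A) :
  (forall u, on_colors D1 u -> psi u = delta_fun u) ->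
  (forall u, on_colors D2 u -> phi u = uext t2 u /\ psi u = uext t2 u) ->
  (forall (n : nat) (chi : nat -> side) (omega : nat -> bool) (b : nat -> felem A),
     (0 < n)%N ->
     (forall j, (j < n)%N ->
        felem_on (fun i => (if omega j then D1 i else D2 i) && side_eqb (sd i) (chi j)) (b j)) ->
     (forall V, V \in pi_chi_omega chi omega n -> ev psi (bprod b n V) = 0) ->
     ev psi (bprod b n (iota 0 n)) = 0 /\
     ev phi (bprod b n (iota 0 n)) =
       \prod_(V <- pi_chi_omega chi omega n) ev phi (bprod b n V)) ->
  on_colors (predU D1 D2) u -> ~~ all (fun l => D1 (tag l)) u ->
  (forall s, subseq s (iota 0 (size u)) -> (size s < size u)%N ->
     phi (map (nth x0 u) s) = Fl (nth x0 u) s) ->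
  phi u = Fl (nth x0 u) (iota 0 (size u)).
Proof.
move=> rT rF Hrule uc hasD2 IH; rewrite /on_colors in uc.
set n := size u. set L := nth x0 u. set base := iota 0 n.
set c := chiord (isLl L) base. set G := splt (D1l L) c.
set f2 := fun s : seq nat => uext t2 (map L s).
pose segof j := nth [::] G (find (fun g => j \in g) G).
pose sl j := [seq i <- base | i \in segof j].
pose cof j := nth 0 (mk0 f2 (sl j)) (index j (sl j)).
have Lc : forall j, (j < n)%N -> D1 (tag (L j)) || D2 (tag (L j)).
  by move=> j jn; move/(all_nthP x0): uc => /(_ j jn).
have cperm : perm_eq c base by apply: chiord_perm.
have ucc : uniq c by rewrite (perm_uniq cperm) iota_uniq.
have memc : forall j, (j \in c) = (j < n)%N.
  by move=> j; rewrite (perm_mem cperm) mem_iota.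
have flatG : flatten G = [seq x <- c | ~~ D1l L x] by apply: flatten_splt.
have uG : uniq (flatten G) by rewrite flatG filter_uniq.
have memG : forall g j, g \in G -> j \in g -> (j < n)%N && ~~ D1l L j.
  by move=> g j gG jg; have := mem_splt gG jg; rewrite memc.
have segG : forall g j, g \in G -> j \in g -> segof j = g.
  by move=> g j gG jg; apply: seg_find.
have cofD1 : forall j, D1l L j -> cof j = 0.
  move=> j Dj; rewrite /cof /sl /segof hasNfind ?nth_default //.
    by rewrite filter_nilmem /= ?nth_nil.
  apply/hasPn => g gG; apply/negP => jg.
  by have := memG g j gG jg; rewrite Dj andbF.
have zeroG : forall g, g \in G -> g != [::] ->
    Ex f2 (map (fun j => (j, cof j)) [seq i <- base | i \in g]) = 0.
  move=> g gG gn; set s := [seq i <- base | i \in g].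
  have -> : map (fun j => (j, cof j)) s = zip s (mk0 f2 s).
    rewrite -zip_index ?size_mk0 ?filter_uniq ?iota_uniq //.
    apply/eq_in_map => j js /=.
    have jg : j \in g by move: js; rewrite mem_filter => /andP[].
    by rewrite /cof /sl (segG g j gG jg).
  apply: mk0P => //.
  have [y yg] : exists y, y \in g by case: (g) gn => // y ? _; exists y; rewrite mem_head.
  have /andP[yn _] := memG _ y gG yg.
  have ys : y \in s by rewrite /s mem_filter yg mem_iota add0n yn.
  by apply/negP => /eqP e; rewrite e in ys.
have onD2 : forall g s', g \in G -> subseq s' [seq i <- base | i \in g] ->
    on_colors D2 (map L s').
  move=> g s' gG ss; rewrite /on_colors all_map; apply/allP => j js /=.
  have : j \in [seq i <- base | i \in g] := mem_subseq ss js.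
  rewrite mem_filter => /andP[jg _].
  have /andP[jn nD] := memG g j gG jg; have := Lc j jn.
  by rewrite /D1l in nD; rewrite (negbTE nD).
pose chi j := sd (tag (L j)). pose omega j := D1 (tag (L j)).
pose b := bb L cof.
have Hpi : pi_chi_omega chi omega n = runs (D1l L) c by [].
have ev_b : forall (f : word A -> R) V, ev f (bprod b n V) =
    Ex (fun s => f (map L s)) (map (fun j => (j, cof j)) [seq i <- base | i \in V]).
  by move=> f V; apply: ev_prodf.
have VinG : forall V, V \in runs (D1l L) c -> ~~ D1l L (head 0%N V) -> V \in G.
  move=> V VR hV.
  have : V \in [seq V <- runs (D1l L) c | ~~ D1l L (head 0%N V)] by rewrite mem_filter hV VR.
  by rewrite (runs_splt (D1l L)) mem_filter => /andP[_ ->].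
have VsubC : forall V y, V \in runs (D1l L) c -> y \in V -> (y < n)%N.
  move=> V y VR yV; have : y \in flatten (runs (D1l L) c) by apply/flattenP; exists V.
  by rewrite runs_flatten memc.
have G2 : forall g, g \in G -> g != [::] -> forall (f : word A -> R),
    (forall u, on_colors D2 u -> f u = uext t2 u) ->
    Ex (fun s => f (map L s)) (map (fun j => (j, cof j)) [seq i <- base | i \in g]) = 0.
  move=> g gG gn f Hf; rewrite -(zeroG g gG gn).
  apply: (@Ex_eqQ _ pred0) => // s'; rewrite mapfst => ss _.
  by apply: Hf; apply: onD2 ss.
have npos : (0 < n)%N.
  by rewrite /n; case: (u) hasD2.
have Hfel : forall j, (j < n)%N ->
    felem_on (fun i => (if omega j then D1 i else D2 i) && side_eqb (sd i) (chi j)) (b j).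
  move=> j jn; rewrite /felem_on /on_colors /= andbT.
  have := Lc j jn; rewrite /omega /chi; case: (D1 _) => /= [_|->]; by case: (sd _).
have Hps : forall V, V \in pi_chi_omega chi omega n -> ev psi (bprod b n V) = 0.
  move=> V; rewrite Hpi => VR; rewrite ev_b.
  have /andP[Vn aV] := runs_const VR.
  case hV: (D1l L (head 0%N V)); last first.
    apply: G2 => //; first by apply: VinG; rewrite ?hV.
    by move=> u' /rF[].
  have allD : forall y, y \in V -> D1l L y.
    by move=> y yV; move/eqP: (allP aV y yV) ->.
  set s := [seq i <- base | i \in V].
  rewrite (_ : map (fun j => (j, cof j)) s = map (fun j => (j, 0)) s); last first.
    by apply/eq_in_map => j; rewrite mem_filter => /andP[jV _] /=; rewrite cofD1 // allD.
  rewrite Ex_zero rT; last first.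
    rewrite /on_colors all_map; apply/allP => j js /=; move: js; rewrite mem_filter => /andP[jV _].
    exact: allD.
  have [y yV] : exists y, y \in V by case: (V) Vn => // y ? _; exists y; rewrite mem_head.
  have ys : y \in s by rewrite mem_filter yV mem_iota add0n (VsubC V y VR yV).
  case E: (map L s) => [|l ls] //.
  have : size (map L s) = 0%N by rewrite E.
  by rewrite size_map => /eqP; rewrite size_eq0 => /eqP e; rewrite e in ys.
have [_ Hphi] := Hrule n chi omega b npos Hfel Hps.
have : ~~ all (D1l L) base.
  apply: contra hasD2 => H; apply/(all_nthP x0) => j jn.
  by move/allP: H => /(_ j); rewrite mem_iota add0n jn => /(_ isT).
case/allPn => j0 jb nD0.
have j0n : (j0 < n)%N by move: jb; rewrite mem_iota.
have j0f : j0 \in flatten G by rewrite flatG mem_filter nD0 memc.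
case/flattenP: j0f => g0 g0G j0g0.
have g0n : g0 != [::] by case: (g0) j0g0.
have g0R : g0 \in runs (D1l L) c.
  have : g0 \in [seq g <- G | g != [::]] by rewrite mem_filter g0n g0G.
  by rewrite -(runs_splt (D1l L)) mem_filter => /andP[_ ->].
rewrite Hpi (big_rem _ g0R) /= !ev_b in Hphi.
rewrite (G2 g0 g0G g0n phi) ?mul0r in Hphi; last by move=> u' /rF[].
rewrite (_ : [seq i <- base | i \in iota 0 n] = base) in Hphi; last first.
  by apply/all_filterP/allP.
have Dq := @Ex_diff _ (fun s => phi (map L s)) (Fl L) (map (fun j => (j, cof j)) base).
rewrite mapfst in Dq.
have ExF0 : Ex (Fl L) (map (fun j => (j, cof j)) base) = 0.
  set Fb := fun s => uext t1 [seq L j | j <- s & D1l L j] *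
                     \prod_(g <- G) f2 [seq j <- s | j \in g].
  have E1 : Ex (Fl L) (map (fun j => (j, cof j)) base) = Ex Fb (map (fun j => (j, cof j)) base).
    apply: (@Ex_eqQ _ (D1l L)); last by move=> p /mapP[j _ ->] /= Dj; exact: cofD1.
    move=> s; rewrite mapfst => ss Hs; rewrite /Fl /Fb; congr (_ * _).
    have sE := elimT (@subseq_uniqP _ s base (iota_uniq 0 n)) ss.
    have -> : chiord (isLl L) s = [seq x <- c | x \in s] by rewrite {1}sE chiord_filter.
    rewrite splt_filter ?big_map.
      apply: eq_big_seq => g gG /=; rewrite /f2; congr (uext t2 (map L _)).
      by apply: eq_in_filter => x xs; rewrite mem_filter xs.
    by move=> x; rewrite memc => xn Dx; apply: Hs; rewrite // mem_iota add0n.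
  rewrite E1.
  have E2 : Ex Fb (map (fun j => (j, cof j)) base) =
    Ex (fun s => (fun s => uext t1 (map L s)) [seq x <- s | D1l L x] *
        (fun s' => \prod_(g <- G) f2 [seq j <- s' | j \in g]) [seq x <- s | ~~ D1l L x])
      (map (fun j => (j, cof j)) base).
    apply: eq_Ex => s /=; congr (_ * _); apply: eq_big_seq => g gG; congr (f2 _).
    rewrite -filter_predI; apply: eq_filter => x /=; case xg: (x \in g) => //=.
    by have /andP[_ ->] := memG g x gG xg.
  rewrite E2 (Ex_mul (D1l L) (fun s => uext t1 (map L s)) (fun s' => \prod_(g <- G) f2 [seq j <- s' | j \in g])).
  rewrite (Ex_bigprod (fun _ => f2)) //; last first.
    move=> x /mapP[[y cy] /=]; rewrite mem_filter => /andP[/= nD /mapP[j jb' [yj _]]] ->.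
    by rewrite flatG mem_filter nD memc yj; move: jb'; rewrite mem_iota.
  rewrite (big_rem _ g0G) /=.
  rewrite (_ : Ex f2 _ = 0) ?mul0r ?mulr0 //.
  rewrite -(zeroG g0 g0G g0n) -filter_predI filter_map; congr (Ex _ (map _ _)).
  apply: eq_filter => j /=; case jg: (j \in g0) => //=.
  by have /andP[_ ->] := memG g0 j g0G jg.
rewrite Hphi ExF0 (map_nth_iota x0 u) !sub0r in Dq.
apply: oppr_inj; apply: Dq.
move=> s ss; rewrite size_map size_iota => sz; exact: IH.
Qed.

Lemma bimon_formula (x0 : letter A) (D2 : pred I) (t : word A -> R) :
  (forall i, D1 i -> D2 i -> False) -> bimon_rel sd D1 D2 t1 t2 t ->
  forall w, w <> [::] -> on_colors (predU D1 D2) w ->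
  t w = Fl (nth x0 w) (iota 0 (size w)).
Proof.
move=> disj [phi [psi [[[_ phi1] [_ psi1] Hres Hrule] Ht]]] w wn wc.
rewrite Ht //.
have rT1 : forall u, on_colors D1 u -> phi u = uext t1 u /\ psi u = delta_fun u.
  move=> u uc; apply: (Hres true); move: uc; rewrite /on_colors; apply: sub_all => l /= H.
  by rewrite H; case: (sd (tag l)).
have rF : forall u, on_colors D2 u -> phi u = uext t2 u /\ psi u = uext t2 u.
  move=> u uc; apply: (Hres false); move: uc; rewrite /on_colors; apply: sub_all => l /= H.
  by rewrite H; case: (sd (tag l)).
have key : forall m u, (size u <= m)%N -> on_colors (predU D1 D2) u ->
    phi u = Fl (nth x0 u) (iota 0 (size u)).
  elim=> [|m IHm] u su uc.
    have -> : u = [::] by case: (u) su.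
    by apply: noD2 => // u' /rT1[].
  case aD: (all (fun l => D1 (tag l)) u).
    by apply: noD2 => // u' /rT1[].
  apply: (withD2 (D2 := D2) (psi := psi)) => //.
  - by move=> u' /rT1[].
  - by rewrite aD.
  move=> s ss sz.
  have us : uniq s := subseq_uniq ss (iota_uniq 0 _).
  rewrite IHm ?size_map ?Fl_sub //.
    by rewrite -ltnS (leq_trans sz su).
  rewrite /on_colors all_map; apply/allP => j js /=.
  have : j \in iota 0 (size u) := mem_subseq ss js.
  rewrite mem_iota add0n => /andP[_ jn].
  by move: uc; rewrite /on_colors => /(all_nthP x0) /(_ j jn).
exact: (key (size w)).
Qed.

Lemma bimon_sub (x0 : letter A) (D2 : pred I) (t : word A -> R) (w : word A) s :
  (forall i, D1 i -> D2 i -> False) -> bimon_rel sd D1 D2 t1 t2 t ->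
  uniq s -> all (fun j => predU D1 D2 (tag (nth x0 w j))) s ->
  uext t (map (nth x0 w) s) = Fl (nth x0 w) s.
Proof.
move=> disj H; case: s => [|j s'] us hs; first by rewrite /Fl /= big_seq1 mulr1.
rewrite [uext t _]/=.
rewrite -[t _]/(t (map (nth x0 w) (j :: s'))).
rewrite (bimon_formula x0 disj H) // ?size_map ?Fl_sub //.
by rewrite /on_colors all_map.
Qed.

End Words2.


Unset Implicit Arguments.
Local Open Scope ring_scope.

Theorem theorem2p3 (C : numClosedFieldType)
  (A : 'I_3 * side -> nualg C)
  (phi1 phi2 phi3 : word A -> C)
  (h1 : lin_functional_on (pairc 0) phi1)
  (h2 : lin_functional_on (pairc 1) phi2)
  (h3 : lin_functional_on (pairc 2) phi3)
  (t12 t12_3 t23 t1_23 : word A -> C) :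
  bimon_rel snd (pairc 0) (pairc 1) phi1 phi2 t12 ->
  bimon_rel snd (predU (pairc 0) (pairc 1)) (pairc 2) t12 phi3 t12_3 ->
  bimon_rel snd (pairc 1) (pairc 2) phi2 phi3 t23 ->
  bimon_rel snd (pairc 0) (predU (pairc 1) (pairc 2)) phi1 t23 t1_23 ->
  forall w : word A, w <> [::] -> t12_3 w = t1_23 w.
Proof.
move=> H12 H12_3 H23 H1_23 w wn.
have [x0 _] : exists x : letter A, True by case: w wn => // x ? _; exists x.
have col : forall i : 'I_3 * side,
    [|| nat_of_ord i.1 == 0, nat_of_ord i.1 == 1 | nat_of_ord i.1 == 2]%N.
  by case=> [[[|[|[|k]]] Hk] s].
have d01 : forall i, pairc 0 i -> pairc 1 i -> False.
  by move=> i; rewrite /pairc /= => /eqP a /eqP b; rewrite a in b.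
have d12 : forall i, pairc 1 i -> pairc 2 i -> False.
  by move=> i; rewrite /pairc /= => /eqP a /eqP b; rewrite a in b.
have d012 : forall i, predU (pairc 0) (pairc 1) i -> pairc 2 i -> False.
  by move=> i; rewrite /pairc /= => /orP[] /eqP a /eqP b; rewrite a in b.
have d0_12 : forall i, pairc 0 i -> predU (pairc 1) (pairc 2) i -> False.
  by move=> i; rewrite /pairc /= => /eqP a /orP[] /eqP b; rewrite a in b.
have wc : forall D : pred ('I_3 * side), (forall i, D i) -> on_colors D w.
  by move=> D HD; rewrite /on_colors; elim: (w) => //= l w' ->; rewrite HD.
have allc : forall D1 D2 : pred ('I_3 * side),
    (forall i, D1 i || D2 i) -> on_colors (predU D1 D2) w.
  by move=> D1 D2 H; apply: wc => i /=; apply: H.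
rewrite (bimon_formula x0 d012 H12_3 wn); last first.
  by apply: allc => i; rewrite /pairc /=; move: (col i); rewrite orbA.
rewrite (bimon_formula x0 d0_12 H1_23 wn); last first.
  by apply: allc => i; rewrite /pairc /=; move: (col i).
set L := nth x0 w. set base := iota 0 (size w).
set q0 := D1l (pairc 0) L. set q1 := D1l (pairc 1) L.
set q01 := D1l (predU (pairc 0) (pairc 1)) L.
set iL := isLl snd L. set c := chiord iL base.
have ucc : uniq c by rewrite (perm_uniq (chiord_perm _ _)) iota_uniq.
have A1 : uext t12 [seq L j | j <- base & q01 j] = Fl snd (pairc 0) phi1 phi2 L [seq j <- base | q01 j].
  apply: (bimon_sub d01 H12); first by rewrite filter_uniq ?iota_uniq.
  by apply/allP => j; rewrite mem_filter => /andP[H _].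
have A2 : forall g, g \in splt q0 c -> uext t23 [seq L j | j <- base & j \in g] =
     Fl snd (pairc 1) phi2 phi3 L [seq j <- base | j \in g].
  move=> g gS; apply: (bimon_sub d12 H23); first by rewrite filter_uniq ?iota_uniq.
  apply/allP => j; rewrite mem_filter => /andP[jg _].
  have /andP[_ n0] := mem_splt gS jg.
  move: n0 (col (tag (L j))); rewrite /q0 /D1l /pairc /= => /negbTE-> //.
rewrite /Fl -/q0 -/q01 -/iL -/c A1 [in RHS](eq_big_seq _ A2) /Fl -/q0 -/q1.
have F1 : [seq j <- [seq j <- base | q01 j] | q0 j] = [seq j <- base | q0 j].
  rewrite -filter_predI; apply: eq_filter => j /=.
  by rewrite /q01 /q0 /D1l /pairc /=; case: (_ == 0)%N.
have F2 : chiord (isLl snd L) [seq j <- base | q01 j] = [seq j <- c | q01 j].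
  exact: chiord_filter.
have F3 : splt q0 [seq j <- c | q01 j] = map (fun g => [seq j <- g | q01 j]) (splt q0 c).
  apply: splt_filter => x _; rewrite /q01 /q0 /D1l /pairc /= => ->.
  by [].
have F7 : splt q01 c = flatten (map (splt q1) (splt q0 c)) by rewrite splt_flatten.
rewrite F1 F2 F3 big_map F7 big_flatten big_map -[LHS]mulrA; congr (_ * _)%R.
rewrite -big_split /=; apply: eq_big_seq => g gS; congr (_ * _)%R.
  congr (uext phi2 (map _ _)).
  rewrite -!filter_predI; apply: eq_filter => x /=.
  rewrite mem_filter; case xg: (x \in g); rewrite ?andbF //=.
  have /andP[_ n0] := mem_splt gS xg.
  by move: n0; rewrite /q01 /q0 /q1 /D1l /pairc /= => /negbTE-> /=; rewrite !andbT andbb.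
have F5 : chiord (isLl snd L) [seq j <- base | j \in g] = g.
  by rewrite chiord_filter (filter_mem_seg ucc gS).
rewrite F5; apply: eq_big_seq => h hS; congr (uext phi3 (map _ _)).
rewrite -filter_predI; apply: eq_filter => x /=.
case xh: (x \in h) => //=.
by have /andP[-> _] := mem_splt hS xh.
Qed.
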